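(* Let $m, n \in \mathbb N$. If $A, B$ are $2n\times 2m$ complex matrices such that $A(H \otimes I_m) = (H \otimes I_n)B$ for all $H \in \mathcal{IH}_2^0$, then $A = B = I_2 \otimes T$ for some $n \times m$ complex matrix $T$.
   Context: $\mathcal{IH}_2^0$ is the set of $2\times 2$ complex matrices that are hermitian, unitary and of trace zero; $\otimes$ is the Kronecker product and $I_n$ the identity matrix. *)

(* Defs.v *)
From HB Require Import structures.
From mathcomp Require Import all_boot all_order all_algebra.
From mathcomp Require Import reals.
From mathcomp.real_closed Require Import complex mxtens.
Set Implicit Arguments. Unset Strict Implicit. Unset Printing Implicit Defensive.
Import Order.TTheory GRing.Theory Num.Theory.
Local Open Scope ring_scope.

Definition adjmx (R : rcfType) (p q : nat) (H : 'M[R[i]]_(p, q)) : 'M[R[i]]_(q, p) :=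
  (map_mx (@conjc R) H)^T.

Definition IH20 (R : rcfType) (H : 'M[R[i]]_2) : Prop :=
  [/\ adjmx H = H,
      H *m adjmx H = 1%:M /\ adjmx H *m H = 1%:M
    & \tr H = 0].

(* Main.v *)
Require Import Defs.
From HB Require Import structures.
From mathcomp Require Import all_boot all_order all_algebra.
From mathcomp Require Import reals.
From mathcomp.real_closed Require Import complex mxtens.
Import GRing.Theory Num.Theory.
Local Open Scope ring_scope.

Section S.
Variable F : comPzRingType.

Lemma sum_tens p m (G : 'I_(p * m) -> F) :
  \sum_k G k = \sum_(b < p) \sum_(l < m) G (mxtens_index (b, l)).
Proof.
rewrite pair_big /=.
rewrite (reindex (fun x : 'I_p * 'I_m => mxtens_index (x.1, x.2))) /=.
  by apply: eq_bigr => -[].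
by exists (@mxtens_unindex p m) => x _; [case: x => ? ?|]; rewrite (mxtens_indexK, mxtens_unindexK).
Qed.

Lemma mulmx_tensr p n m (A : 'M[F]_(p * n, p * m)) (H : 'M[F]_p) a i c j :
  (A *m (H *t (1%:M : 'M[F]_m))) (mxtens_index (a, i)) (mxtens_index (c, j))
  = \sum_b A (mxtens_index (a, i)) (mxtens_index (b, j)) * H b c.
Proof.
rewrite mxE sum_tens; apply: eq_bigr => b _.
rewrite (bigD1 j) //= big1 ?addr0 => [|l /negbTE lj]; rewrite tensmxE mxE ?lj ?eqxx.
  by rewrite mulr1.
by rewrite mulr0 mulr0.
Qed.

Lemma mulmx_tensl p n m (B : 'M[F]_(p * n, p * m)) (H : 'M[F]_p) a i c j :
  ((H *t (1%:M : 'M[F]_n)) *m B) (mxtens_index (a, i)) (mxtens_index (c, j))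
  = \sum_b H a b * B (mxtens_index (b, i)) (mxtens_index (c, j)).
Proof.
rewrite mxE sum_tens; apply: eq_bigr => b _.
rewrite (bigD1 i) //= big1 ?addr0 => [|l /negbTE lj]; rewrite tensmxE mxE ?eqxx.
  by rewrite mulr1.
by rewrite eq_sym lj mulr0 mul0r.
Qed.
End S.
Section P.
Variable R : rcfType.
Local Notation C := R[i].

Definition sx : 'M[C]_2 := \matrix_(a, b) if a == b then 0 else 1.
Definition sz : 'M[C]_2 := \matrix_(a, b)
  if a == b then (if a == ord0 then 1 else -1) else 0.
Definition sy : 'M[C]_2 := \matrix_(a, b)
  if a == b then 0 else (if a == ord0 then - 'i%C else 'i%C).

Ltac cas2 a := case: a => [[|[|?]]] ?.
Ltac clc := rewrite ?(mul0r,mulr0,mul1r,mulr1,add0r,addr0,mulrNN,mulNr,mulrN,opprK,oppr0,subrr);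
  rewrite ?(=^~ expr2, sqr_i, opprK) //;
  apply/eqP; rewrite eq_complex /= ?oppr0 ?opprK ?eqxx //.

Lemma IH20_gen (H : 'M[C]_2) : adjmx H = H -> H *m H = 1%:M -> \tr H = 0 -> IH20 H.
Proof. by move=> a s t; rewrite /IH20 a s t. Qed.

Lemma IH20_sx : IH20 sx.
Proof.
apply: IH20_gen.
- apply/matrixP => a b; rewrite !mxE; cas2 a; cas2 b => //=; clc.
- apply/matrixP => a b; rewrite !mxE !big_ord_recl big_ord0 /sx !mxE; cas2 a; cas2 b => //=; clc.
- rewrite /mxtrace !big_ord_recl big_ord0 /sx !mxE /=; clc.
Qed.

Lemma IH20_sz : IH20 sz.
Proof.
apply: IH20_gen.
- apply/matrixP => a b; rewrite !mxE; cas2 a; cas2 b => //=; clc.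
- apply/matrixP => a b; rewrite !mxE !big_ord_recl big_ord0 /sz !mxE; cas2 a; cas2 b => //=; clc.
- rewrite /mxtrace !big_ord_recl big_ord0 /sz !mxE /=; clc.
Qed.

Lemma IH20_sy : IH20 sy.
Proof.
apply: IH20_gen.
- apply/matrixP => a b; rewrite !mxE; cas2 a; cas2 b => //=; clc.
- apply/matrixP => a b; rewrite !mxE !big_ord_recl big_ord0 /sy !mxE; cas2 a; cas2 b => //=; clc.
- rewrite /mxtrace !big_ord_recl big_ord0 /sy !mxE /=; clc.
Qed.
Lemma ord2_cases (a : 'I_2) : a = ord0 \/ a = lift ord0 ord0.
Proof. case: a => [[|[|?]]] p; [left|right|by []]; exact: val_inj. Qed.

Lemma zi (x : C) : x * 'i%C = - ('i%C * x) -> x = 0.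
Proof.
rewrite mulrC => /eqP; rewrite -subr_eq0 opprK -mulr2n mulrn_eq0 /= mulf_eq0 => /orP[|/eqP //].
by move/eqP; case=> /eqP; rewrite oner_eq0.
Qed.

Lemma two_by_two (P Q : 'M[C]_2) :
  (forall H, IH20 H -> P *m H = H *m Q) ->
  let o0 := (ord0 : 'I_2) in let o1 := lift ord0 (ord0 : 'I_1) in
  (P o0 o1 = 0 /\ P o1 o0 = 0 /\ P o1 o1 = P o0 o0) /\
  (Q o0 o0 = P o0 o0 /\ Q o1 o1 = P o0 o0 /\ Q o0 o1 = 0 /\ Q o1 o0 = 0).
Proof.
move=> h o0 o1.
have e := fun H hH (a c : 'I_2) => congr1 (fun M : 'M[C]_2 => M a c) (h H hH).
have ex00 := e _ IH20_sx o0 o0; have ex01 := e _ IH20_sx o0 o1;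
have ex10 := e _ IH20_sx o1 o0; have ex11 := e _ IH20_sx o1 o1.
have ez00 := e _ IH20_sz o0 o0; have ez01 := e _ IH20_sz o0 o1;
have ez10 := e _ IH20_sz o1 o0; have ez11 := e _ IH20_sz o1 o1.
have ey00 := e _ IH20_sy o0 o0; have ey01 := e _ IH20_sy o0 o1;
have ey10 := e _ IH20_sy o1 o0; have ey11 := e _ IH20_sy o1 o1.
move: ex00 ex01 ex10 ex11 ez00 ez01 ez10 ez11 ey00 ey01 ey10 ey11.
rewrite /= !mxE !big_ord_recl !big_ord0 /sx /sy /sz !mxE /=.
rewrite ?(mul0r,mulr0,mul1r,mulr1,add0r,addr0,mulrNN,mulNr,mulrN,opprK,oppr0,subrr).
subst o0 o1.
set p00 := P ord0 ord0; set p01 := P ord0 (lift ord0 ord0);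
set p10 := P (lift ord0 ord0) ord0; set p11 := P (lift ord0 ord0) (lift ord0 ord0).
set q00 := Q ord0 ord0; set q01 := Q ord0 (lift ord0 ord0);
set q10 := Q (lift ord0 ord0) ord0; set q11 := Q (lift ord0 ord0) (lift ord0 ord0).
move=> x00 x01 x10 x11 z00 z01 z10 z11 y00 y01 y10 y11.
have p01_0 : p01 = 0.
  by apply: zi; move: y00; rewrite -x00.
have p10_0 : p10 = 0.
  apply: zi; move: y11; rewrite -x11 => /(congr1 (fun t => - t)); rewrite opprK => ->.
  by rewrite mulrC.
move/oppr_inj: z11 => z11.
rewrite -x00 -x11 p01_0 p10_0 -z00 -z11 z11 x01; do !split.
Qed.
End P.

Theorem lemma3p3 (R : realType) (m n : nat) (A B : 'M[R[i]]_(2 * n, 2 * m)) :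
  (forall H : 'M[R[i]]_2, IH20 H ->
     A *m (H *t (1%:M : 'M[R[i]]_m)) = (H *t (1%:M : 'M[R[i]]_n)) *m B) ->
  exists T : 'M[R[i]]_(n, m),
    A = (1%:M : 'M[R[i]]_2) *t T /\ B = (1%:M : 'M[R[i]]_2) *t T.
Proof.
move=> h.
pose P i j : 'M[R[i]]_2 := \matrix_(a, c) A (mxtens_index (a, i)) (mxtens_index (c, j)).
pose Q i j : 'M[R[i]]_2 := \matrix_(a, c) B (mxtens_index (a, i)) (mxtens_index (c, j)).
have PQ i j : forall H, IH20 H -> P i j *m H = H *m Q i j.
  move=> H hH; apply/matrixP => a c.
  have := congr1 (fun M : 'M[R[i]]_(2 * n, 2 * m) => M (mxtens_index (a, i)) (mxtens_index (c, j))) (h H hH).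
  rewrite /= mulmx_tensr mulmx_tensl !mxE => E.
  rewrite (eq_bigr (fun b => A (mxtens_index (a, i)) (mxtens_index (b, j)) * H b c)) => [|b _]; last by rewrite mxE.
  rewrite E; apply: eq_bigr => b _; by rewrite mxE.
pose T := \matrix_(i, j) A (mxtens_index (ord0 : 'I_2, i)) (mxtens_index (ord0 : 'I_2, j)).
exists T; split; apply/matrixP => k l;
  case: (mxtens_indexP k) => a i; case: (mxtens_indexP l) => c j;
  rewrite tensmxE !mxE;
  have [[P01 [P10 P11]] [Q00 [Q11 [Q01 Q10]]]] := @two_by_two _ _ _ (PQ i j);
  move: P01 P10 P11 Q00 Q11 Q01 Q10; rewrite !mxE;
  case: (ord2_cases a) => ->; case: (ord2_cases c) => -> /=;
  move=> *; rewrite ?mul1r ?mul0r //.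
Qed.
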